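(* Let $a,b,g,h>0$ with $a+b=g+h$. Then the input crank of the Minkowskian planar 4R linkage with these link lengths is a crank.
   Context: Link lengths: $a$ input crank, $b$ output crank, $g$ ground (fixed link), $h$ coupler. Put $T_1=g+b-h-a$, $T_2=a-g+b-h$, $T_3=g-a-b-h$, $T_4=g-a+b+h$. The input crank is a crank if $T_1T_2\ge0$ and $T_3T_4\le0$, a rocker if $T_1T_2<0$ and $T_3T_4\le0$, and a superrocker if $T_1T_2<0$ and $T_3T_4>0$. *)

(* Defs.v *)
From Stdlib Require Import Reals.
Open Scope R_scope.

(* Link lengths: a input crank, b output crank, g ground, h coupler. *)
Definition T1 (a b g h : R) : R := g + b - h - a.
Definition T2 (a b g h : R) : R := a - g + b - h.
Definition T3 (a b g h : R) : R := g - a - b - h.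
Definition T4 (a b g h : R) : R := g - a + b + h.

Definition input_is_crank (a b g h : R) : Prop :=
  0 <= T1 a b g h * T2 a b g h /\ T3 a b g h * T4 a b g h <= 0.
Definition input_is_rocker (a b g h : R) : Prop :=
  T1 a b g h * T2 a b g h < 0 /\ T3 a b g h * T4 a b g h <= 0.
Definition input_is_superrocker (a b g h : R) : Prop :=
  T1 a b g h * T2 a b g h < 0 /\ 0 < T3 a b g h * T4 a b g h.

(* Main.v *)
Require Import Defs.
From Stdlib Require Import Reals Lra.
Open Scope R_scope.

Theorem mainTheorem18 (a b g h : R) :
  0 < a -> 0 < b -> 0 < g -> 0 < h -> a + b = g + h ->
  input_is_crank a b g h.
Proof.
  intros Ha Hb Hg Hh E. unfold input_is_crank, T1, T2, T3, T4.
  assert (E2 : h = a + b - g) by lra. subst h.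
  replace (a - g + b - (a + b - g)) with 0 by ring.
  rewrite Rmult_0_r. split; [lra|].
  replace (g - a - b - (a + b - g)) with (-(2*(a+b-g))) by ring.
  replace (g - a + b + (a + b - g)) with (2*b) by ring.
  assert (0 <= (2*(a+b-g)) * (2*b)) by (apply Rmult_le_pos; lra).
  lra.
Qed.
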